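(* Let $R$ be a ring. The following are equivalent: (a) $R$ satisfies the irreducible intersection property. (b) For every ideal $I\subsetneq R$ such that $\Sigma=\{p\in\mathrm{Spec}(R): p\subset I\}$ is nonempty, $\Sigma$ has a unique maximal element with respect to inclusion. (c) For all distinct prime ideals $p_1,p_2$ of $R$ with $p_1+p_2\neq R$, the set $\{p\in\mathrm{Spec}(R): p\subset p_1+p_2\}$ has a unique maximal element with respect to inclusion.
   Context: All rings are commutative with $1$. A ring $R$ satisfies the irreducible intersection property if for any prime ideals $p_1,p_2\subset R$, either $p_1+p_2=R$ or $p_1+p_2$ is a prime ideal. *)

(* Defs.v *)
From HB Require Import structures.
From mathcomp Require Import all_boot all_algebra.
Set Implicit Arguments. Unset Strict Implicit. Unset Printing Implicit Defensive.
Import GRing.Theory.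
Local Open Scope ring_scope.

Definition is_ideal (R : comPzRingType) (I : R -> Prop) : Prop :=
  I 0 /\ (forall x y, I x -> I y -> I (x + y)) /\ (forall r x, I x -> I (r * x)).

Definition ideal_sub (R : comPzRingType) (I J : R -> Prop) : Prop :=
  forall x, I x -> J x.
Definition ideal_eq (R : comPzRingType) (I J : R -> Prop) : Prop :=
  forall x, I x <-> J x.

Definition is_whole (R : comPzRingType) (I : R -> Prop) : Prop := forall x, I x.

Definition is_prime_ideal (R : comPzRingType) (p : R -> Prop) : Prop :=
  is_ideal p /\ ~ p 1 /\ (forall a b, p (a * b) -> p a \/ p b).

Definition ideal_add (R : comPzRingType) (I J : R -> Prop) : R -> Prop :=
  fun x => exists a b, I a /\ J b /\ x = a + b.

Definition irreducible_intersection_property (R : comPzRingType) : Prop :=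
  forall p1 p2 : R -> Prop, is_prime_ideal p1 -> is_prime_ideal p2 ->
    is_whole (ideal_add p1 p2) \/ is_prime_ideal (ideal_add p1 p2).

Definition primes_below (R : comPzRingType) (I : R -> Prop) (p : R -> Prop) : Prop :=
  is_prime_ideal p /\ ideal_sub p I.

Definition is_maximal_in (R : comPzRingType) (S : (R -> Prop) -> Prop)
  (m : R -> Prop) : Prop :=
  S m /\ (forall q, S q -> ideal_sub m q -> ideal_eq q m).

Definition unique_maximal (R : comPzRingType) (S : (R -> Prop) -> Prop) : Prop :=
  exists m, is_maximal_in S m /\ (forall m', is_maximal_in S m' -> ideal_eq m' m).

(* Main.v *)
Require Import Defs.
From HB Require Import structures.
From mathcomp Require Import all_boot all_algebra.
From mathcomp Require Import boolp classical_sets.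
From Stdlib Require Import Classical.
Import GRing.Theory.
Local Open Scope ring_scope.
Set Implicit Arguments. Unset Strict Implicit.

Lemma exists_max (R : comPzRingType) (I p : R -> Prop) :
  primes_below I p ->
  exists m, is_maximal_in (primes_below I) m /\ ideal_sub p m.
Proof.
move=> [pp pI].
pose good (A : R -> Prop) := primes_below I A /\ ideal_sub p A.
pose P (A : set R) := (forall x, ~ A x) \/ good A.
have [] := @Zorn_bigcup R P.
  move=> F FP Ftot.
  case: (classic (exists X, F X /\ good X)) => [[X0 [FX0 gX0]]|hno]; last first.
    left=> x [X FX Xx].
    case: (FP X FX) => [h|gX]; first exact: h Xx.
    by apply: hno; exists X.
  right.
  have Fg : forall X x, F X -> X x -> good X.
    by move=> X x FX Xx; case: (FP X FX) => // h; case: (h x).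
  split; last by move=> x px; exists X0 => //; apply: gX0.2.
  split; last first.
    move=> x [X FX Xx]; have [[_ XI] _] := Fg X x FX Xx; exact: XI.
  split.
    split; first by exists X0 => //; case: gX0 => [[[[h _] _] _] _].
    split.
      move=> x y [X FX Xx] [Y FY Yy].
      have [[[[_ [XD _]] _] _] _] := Fg X x FX Xx.
      have [[[[_ [YD _]] _] _] _] := Fg Y y FY Yy.
      case: (Ftot X Y FX FY) => [XY|YX].
        exists Y => //; apply: YD => //; exact: XY.
      exists X => //; apply: XD => //; exact: YX.
    move=> r x [X FX Xx].
    have [[[[_ [_ XM]] _] _] _] := Fg X x FX Xx.
    by exists X => //; apply: XM.
  split.
    move=> [X FX X1].
    have [[[_ [h _]] _] _] := Fg X 1 FX X1; exact: h.
  move=> a b [X FX Xab].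
  have [[[_ [_ h]] _] _] := Fg X _ FX Xab.
  by case: (h a b Xab) => ?; [left|right]; exists X.
move=> A [PA Amax].
have gA : good A.
  case: PA => // hA; exfalso.
  apply: (Amax p); last by right; split => //; split.
  split; first by move=> x /hA.
  move=> h; have [[p0 _] _] := pp; exact: (hA 0 (h 0 p0)).
exists A; split; last exact: gA.2.
split; first exact: gA.1.
move=> q qS Aq.
case: (classic (ideal_sub q A)) => [qA|nqA].
  by move=> x; split; [apply: qA|apply: Aq].
exfalso; apply: (Amax q); first by split.
right; split => // x px; apply: Aq; exact: gA.2 x px.
Qed.

Lemma add_ideal (R : comPzRingType) (I J : R -> Prop) :
  is_ideal I -> is_ideal J -> is_ideal (ideal_add I J).
Proof.
move=> [I0 [ID IM]] [J0 [JD JM]]; split; first by exists 0, 0; rewrite addr0.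
split.
  move=> x y [a [b [Ia [Jb ->]]]] [c [d [Ic [Jd ->]]]].
  exists (a + c), (b + d); do 2 (split; first by auto).
  by rewrite addrACA.
move=> r x [a [b [Ia [Jb ->]]]]; exists (r * a), (r * b).
by rewrite mulrDr; auto.
Qed.

Lemma sub_addl (R : comPzRingType) (I J : R -> Prop) :
  is_ideal J -> ideal_sub I (ideal_add I J).
Proof. by move=> [J0 _] x Ix; exists x, 0; rewrite addr0. Qed.

Lemma sub_addr (R : comPzRingType) (I J : R -> Prop) :
  is_ideal I -> ideal_sub J (ideal_add I J).
Proof. by move=> [I0 _] x Jx; exists 0, x; rewrite add0r. Qed.

Lemma add_sub (R : comPzRingType) (I J K : R -> Prop) :
  is_ideal K -> ideal_sub I K -> ideal_sub J K -> ideal_sub (ideal_add I J) K.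
Proof. by move=> [_ [KD _]] IK JK x [a [b [Ia [Jb ->]]]]; apply: KD; auto. Qed.

Lemma prime_ext (R : comPzRingType) (P Q : R -> Prop) :
  ideal_eq P Q -> is_prime_ideal P -> is_prime_ideal Q.
Proof.
move=> e [[P0 [PD PM]] [P1 Pp]]; split; last split.
- split; first by apply/e.
  split; first by move=> x y /e ? /e ?; apply/e; auto.
  by move=> r x /e ?; apply/e; auto.
- by move=> /e.
- by move=> a b /e /Pp [] ?; [left|right]; apply/e.
Qed.

Lemma greatest (R : comPzRingType) (I : R -> Prop) :
  unique_maximal (primes_below I) ->
  exists m, primes_below I m /\ forall q, primes_below I q -> ideal_sub q m.
Proof.
move=> [m [[Sm mmax] uniq]]; exists m; split => // q Sq.
have [m' [mm' qm']] := exists_max Sq.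
move=> x qx; apply/(uniq m' mm'); exact: qm'.
Qed.

Lemma prime_of_um (R : comPzRingType) (p1 p2 : R -> Prop) :
  is_prime_ideal p1 -> is_prime_ideal p2 ->
  unique_maximal (primes_below (ideal_add p1 p2)) ->
  is_prime_ideal (ideal_add p1 p2).
Proof.
move=> h1 h2 /greatest [m [[mp msub] mg]].
have i1 := h1.1; have i2 := h2.1.
have s1 : ideal_sub p1 m.
  apply: mg; split => //; exact: sub_addl.
have s2 : ideal_sub p2 m.
  apply: mg; split => //; exact: sub_addr.
apply: (prime_ext _ mp) => x; split; first exact: msub.
by apply: add_sub => //; exact: mp.1.
Qed.

Theorem mainTheorem8 (R : comPzRingType) :
  (irreducible_intersection_property R <->
   (forall I : R -> Prop, is_ideal I -> ~ is_whole I ->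
      (exists p, primes_below I p) -> unique_maximal (primes_below I)))
  /\
  ((forall I : R -> Prop, is_ideal I -> ~ is_whole I ->
      (exists p, primes_below I p) -> unique_maximal (primes_below I)) <->
   (forall p1 p2 : R -> Prop, is_prime_ideal p1 -> is_prime_ideal p2 ->
      ~ ideal_eq p1 p2 -> ~ is_whole (ideal_add p1 p2) ->
      unique_maximal (primes_below (ideal_add p1 p2)))).
Proof.
have AB : irreducible_intersection_property R ->
   (forall I : R -> Prop, is_ideal I -> ~ is_whole I ->
      (exists p, primes_below I p) -> unique_maximal (primes_below I)).
  move=> A I iI nw [p Sp].
  have [m [mm _]] := exists_max Sp.
  exists m; split => // m' mm'.
  have [[pm mI] mmax] := mm; have [[pm' mI'] mmax'] := mm'.
  have sI : ideal_sub (ideal_add m m') I by apply: add_sub.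
  have Ss : primes_below I (ideal_add m m').
    split => //; case: (A m m' pm pm') => // hw.
    by exfalso; apply: nw => x; apply: sI; apply: hw.
  have e1 := mmax _ Ss (@sub_addl _ m m' pm'.1).
  have e2 := mmax' _ Ss (@sub_addr _ m m' pm.1).
  by move=> x; rewrite -e2 e1.
have BA : (forall I : R -> Prop, is_ideal I -> ~ is_whole I ->
      (exists p, primes_below I p) -> unique_maximal (primes_below I)) ->
      irreducible_intersection_property R.
  move=> B p1 p2 h1 h2.
  case: (classic (is_whole (ideal_add p1 p2))) => hw; [by left|right].
  apply: prime_of_um => //; apply: B => //.
    exact: add_ideal h1.1 h2.1.
  exists p1; split => //; exact: sub_addl h2.1.
have BC : (forall I : R -> Prop, is_ideal I -> ~ is_whole I ->
      (exists p, primes_below I p) -> unique_maximal (primes_below I)) ->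
   (forall p1 p2 : R -> Prop, is_prime_ideal p1 -> is_prime_ideal p2 ->
      ~ ideal_eq p1 p2 -> ~ is_whole (ideal_add p1 p2) ->
      unique_maximal (primes_below (ideal_add p1 p2))).
  move=> B p1 p2 h1 h2 _ hw; apply: B => //.
    exact: add_ideal h1.1 h2.1.
  exists p1; split => //; exact: sub_addl h2.1.
have CA : (forall p1 p2 : R -> Prop, is_prime_ideal p1 -> is_prime_ideal p2 ->
      ~ ideal_eq p1 p2 -> ~ is_whole (ideal_add p1 p2) ->
      unique_maximal (primes_below (ideal_add p1 p2))) ->
      irreducible_intersection_property R.
  move=> C p1 p2 h1 h2.
  case: (classic (is_whole (ideal_add p1 p2))) => hw; [by left|right].
  case: (classic (ideal_eq p1 p2)) => he; last by apply: prime_of_um => //; apply: C.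
  apply: (prime_ext _ h1) => x; split; first by move: x; exact: sub_addl h2.1.
  by move: x; apply: add_sub => //; [exact: h1.1| move=> y /he].
split; split; auto.
Qed.
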